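(* Let $\mathcal S$ be any one of the five step sets $\mathcal A,\mathcal B,\mathcal C,\mathcal D,\mathcal E$, let $k\ge0$ and $Q_k\in S_k$. Then $\sum_{n\ge0}\#_{\mathcal S}\{(0,0)\xrightarrow{n}Q_k\}\,2^{-n}\in\mathbb Q$.
   Context: Let $\mathbb N=\{0,1,2,\dots\}$. For a step set $\mathcal S$, $\#_{\mathcal S}\{(0,0)\xrightarrow{n}(i,j)\}$ is the number of sequences $p_0=(0,0),p_1,\dots,p_n=(i,j)$ of points of $\mathbb N^2$ with $p_m-p_{m-1}\in\mathcal S$ for all $m$. The step sets are $\mathcal A=\{(-1,1),(1,1),(1,-1)\}$, $\mathcal B=\{(-1,1),(0,1),(1,0),(1,-1)\}$, $\mathcal C=\{(-1,1),(0,1),(1,1),(1,0),(1,-1)\}$, $\mathcal D=\{(-1,1),(0,1),(1,-1)\}$, $\mathcal E=\{(-1,1),(0,1),(1,1),(1,-1)\}$. For $k\ge0$, $S_k=\{(k-i,i):0\le i\le k\}$. *)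

(* Defs.v *)
From Stdlib Require Import Reals ZArith List QArith.
From Coquelicot Require Import Coquelicot.
Import ListNotations.

Definition point := (Z * Z)%type.

Definition stepA : list point := [(-1,1); (1,1); (1,-1)]%Z.
Definition stepB : list point := [(-1,1); (0,1); (1,0); (1,-1)]%Z.
Definition stepC : list point := [(-1,1); (0,1); (1,1); (1,0); (1,-1)]%Z.
Definition stepD : list point := [(-1,1); (0,1); (1,-1)]%Z.
Definition stepE : list point := [(-1,1); (0,1); (1,1); (1,-1)]%Z.

Fixpoint words (St : list point) (n : nat) : list (list point) :=
  match n with
  | O => [nil]
  | S m => flat_map (fun s => map (cons s) (words St m)) St
  end.

Fixpoint walk_ok (p : point) (w : list point) (target : point) : bool :=
  match w with
  | nil => (Z.eqb (fst p) (fst target) && Z.eqb (snd p) (snd target))%bool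
  | s :: w' =>
      let q := (fst p + fst s, snd p + snd s)%Z in
      (Z.leb 0 (fst q) && Z.leb 0 (snd q) && walk_ok q w' target)%bool
  end.

(* #_St{(0,0) --n--> target}: number of walks of length n in N^2 from (0,0)
   to target with steps in St (a walk p_0..p_n is determined by its steps). *)
Definition nwalks (St : list point) (n : nat) (target : point) : nat :=
  length (filter (fun w => walk_ok (0%Z, 0%Z) w target) (words St n)).

Definition Sk_point (k i : nat) : point := (Z.of_nat (k - i), Z.of_nat i).

(* Main.v *)
Require Import Defs.
From Stdlib Require Import Reals ZArith List QArith Qreals Lia Lra.
From Coquelicot Require Import Coquelicot.
Import ListNotations.
Open Scope R_scope.

Fixpoint sumL {A} (l : list A) (f : A -> R) : R :=
  match l with nil => 0 | x :: l' => f x + sumL l' f end.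

Lemma sumL_ext {A} (l : list A) f g : (forall x, In x l -> f x = g x) -> sumL l f = sumL l g.
Proof. induction l; simpl; intros H; auto. rewrite H, IHl; auto. Qed.
Lemma sumL_plus {A} (l : list A) f g : sumL l (fun x => f x + g x) = sumL l f + sumL l g.
Proof. induction l; simpl; try rewrite IHl; ring. Qed.
Lemma sumL_scal {A} (l : list A) c f : sumL l (fun x => c * f x) = c * sumL l f.
Proof. induction l; simpl; try rewrite IHl; ring. Qed.
Lemma sumL_zero {A} (l : list A) f : (forall x, In x l -> f x = 0) -> sumL l f = 0.
Proof. intros H; rewrite (sumL_ext l f (fun _ => 0)); auto. clear H. induction l; simpl; [reflexivity|]. rewrite IHl; ring. Qed.
Lemma sumL_delta n f i : (i < n)%nat -> forall s, sumL (seq s n) (fun j => (if Nat.eqb (s+i) j then 1 else 0) * f j) = f (s+i)%nat.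
Proof.
  revert i; induction n; intros i Hi s; [lia|]. simpl.
  destruct i as [|i].
  - rewrite Nat.add_0_r, Nat.eqb_refl. rewrite sumL_zero; [ring|].
    intros x Hx; apply in_seq in Hx. destruct (Nat.eqb_spec s x); [lia|ring].
  - destruct (Nat.eqb_spec (s + S i) s); [lia|].
    replace (s + S i)%nat with (S s + i)%nat by lia. rewrite IHn by lia. ring.
Qed.

Definition padd (p s : point) : point := (fst p + fst s, snd p + snd s)%Z.
Definition okb (q : point) : bool := (Z.leb 0 (fst q) && Z.leb 0 (snd q))%bool.
Definition cnt (St : list point) (t : point) (n : nat) (p : point) : nat := length (filter (fun w => walk_ok p w t) (words St n)).

Lemma cnt_one (t p s : point) (W : list (list point)) :
  length (filter (fun w => walk_ok p w t) (map (cons s) W)) =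
  if okb (padd p s) then length (filter (fun w => walk_ok (padd p s) w t) W) else 0%nat.
Proof.
  unfold okb, padd; simpl.
  destruct ((0 <=? fst p + fst s)%Z && (0 <=? snd p + snd s)%Z)%bool eqn:E.
  - induction W as [|a W IHW]; simpl; auto. rewrite E; simpl.
    destruct (walk_ok _ a t); simpl; auto.
  - induction W as [|a W IHW]; simpl; auto. rewrite E; simpl. auto.
Qed.

Lemma cnt_gen (t p : point) (L : list point) (W : list (list point)) :
  INR (length (filter (fun w => walk_ok p w t) (flat_map (fun s => map (cons s) W) L))) =
  sumL L (fun s => if okb (padd p s) then INR (length (filter (fun w => walk_ok (padd p s) w t) W)) else 0).
Proof.
  induction L as [|s L IH]; simpl; auto.
  rewrite filter_app, length_app, plus_INR, IH, cnt_one. f_equal.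
  destruct (okb _); auto.
Qed.

Lemma cnt_S St t n p : INR (cnt St t (S n) p) =
  sumL St (fun s => if okb (padd p s) then INR (cnt St t n (padd p s)) else 0).
Proof. unfold cnt; simpl words. apply cnt_gen. Qed.

Definition ept (t p : point) : R :=
  if (Z.eqb (fst p) (fst t) && Z.eqb (snd p) (snd t))%bool then 1 else 0.

Lemma cnt_0 St t p : INR (cnt St t 0 p) = ept t p.
Proof. unfold cnt, ept; simpl. destruct (_ && _)%bool; simpl; auto. Qed.

Definition term (St : list point) (t p : point) (n : nat) := INR (cnt St t n p) / 2 ^ n.

Lemma term_S St t p n : term St t p (S n) =
  /2 * sumL St (fun s => if okb (padd p s) then term St t (padd p s) n else 0).
Proof.
  unfold term. rewrite cnt_S, <- sumL_scal. unfold Rdiv. rewrite Rmult_comm, <- sumL_scal.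
  apply sumL_ext; intros s _. destruct (okb _); simpl; [|ring].
  rewrite Rinv_mult. ring.
Qed.
Definition Hg (L i j : nat) : R :=
  if (i <=? j)%nat then 2*(INR i+1)*(INR L+1-INR j)/(INR L+2)
  else 2*(INR j+1)*(INR L+1-INR i)/(INR L+2).

Lemma Hg_id L i j : (i <= L)%nat -> (j <= L)%nat ->
  Hg L i j = (if Nat.eqb i j then 1 else 0) +
   /2 * ((if (i <? L)%nat then 1 else 0) * Hg L (S i) j + (if (0 <? i)%nat then 1 else 0) * Hg L (pred i) j).
Proof.
  intros HiL HjL. unfold Hg.
  assert (HL : INR L + 2 <> 0) by (pose proof (pos_INR L); lra).
  destruct i as [|i]; simpl pred;
  repeat match goal with
  | |- context [Nat.leb ?a ?b] => destruct (Nat.leb_spec a b)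
  | |- context [Nat.ltb ?a ?b] => destruct (Nat.ltb_spec a b)
  | |- context [Nat.eqb ?a ?b] => destruct (Nat.eqb_spec a b)
  end; try lia;
  repeat match goal with
  | H : (?x <= ?y)%nat, H' : (?y <= ?x)%nat |- _ => assert (x = y) by lia; clear H H'
  | H : (?x < S ?y)%nat, H' : (?y < ?x)%nat |- _ => lia
  end;
  try subst;
  try (assert (j = i) by lia; subst j);
  try (assert (j = S i) by lia; subst j);
  try (assert (L = S i) by lia; subst L);
  try (assert (L = S (S i)) by lia; subst L);
  try (assert (L = j) by lia; subst L);
  rewrite ?S_INR; simpl INR;
  try pose proof (pos_INR i); try pose proof (pos_INR j); try pose proof (pos_INR L);
  field; lra.
Qed.

Definition N2 (p : point) := (0 <= fst p)%Z /\ (0 <= snd p)%Z.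
Definition lev (p : point) := (fst p + snd p)%Z.
Definition pt (L j : nat) : point := (Z.of_nat L - Z.of_nat j, Z.of_nat j)%Z.

Fixpoint V (up : list point) (t : point) (k : nat) (f : nat) (p : point) : R :=
  match f with
  | O => 0
  | S f' =>
    if (Z.leb 0 (fst p) && Z.leb 0 (snd p) && Z.leb (fst p + snd p) (Z.of_nat k))%bool then
      sumL (seq 0 (S (Z.to_nat (fst p + snd p)))) (fun j =>
        Hg (Z.to_nat (fst p + snd p)) (Z.to_nat (snd p)) j *
        (ept t (pt (Z.to_nat (fst p + snd p)) j) +
         /2 * sumL up (fun s => V up t k f' (padd (pt (Z.to_nat (fst p + snd p)) j) s))))
    else 0
  end.

Definition U up t k f q := ept t q + /2 * sumL up (fun s => V up t k f (padd q s)).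

Definition upOK (up : list point) := forall s, In s up ->
  (0 <= fst s)%Z /\ (0 <= snd s)%Z /\ (1 <= fst s + snd s)%Z.

Lemma V_S up t k f p : V up t k (S f) p =
  if (Z.leb 0 (fst p) && Z.leb 0 (snd p) && Z.leb (fst p + snd p) (Z.of_nat k))%bool then
      sumL (seq 0 (S (Z.to_nat (fst p + snd p)))) (fun j =>
        Hg (Z.to_nat (fst p + snd p)) (Z.to_nat (snd p)) j * U up t k f (pt (Z.to_nat (fst p + snd p)) j))
  else 0.
Proof. reflexivity. Qed.

Lemma V_high up t k f p : (Z.of_nat k < lev p)%Z -> V up t k f p = 0.
Proof.
  unfold lev; intros H; destruct f; simpl; auto.
  destruct (Z.leb_spec (fst p + snd p) (Z.of_nat k)); [lia|].
  rewrite !Bool.andb_false_r; auto.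
Qed.

Lemma V_stab up t k (Hup : upOK up) f : forall p,
  (Z.of_nat k < lev p + Z.of_nat f)%Z -> V up t k f p = V up t k (S f) p.
Proof.
  induction f; intros p H.
  - rewrite (V_high up t k 1) by lia. reflexivity.
  - rewrite (V_S _ _ _ (S f)), V_S. unfold U.
    destruct (_ && _)%bool eqn:E; auto.
    apply sumL_ext; intros j Hj. f_equal. f_equal. f_equal.
    apply sumL_ext; intros s Hs. apply IHf.
    apply in_seq in Hj. destruct (Hup s Hs) as (?&?&?).
    apply Bool.andb_true_iff in E as [E E3]. apply Bool.andb_true_iff in E as [E1 E2].
    apply Z.leb_le in E1, E2. unfold lev, padd, pt in *; simpl in *.
    lia.
Qed.

Lemma V_stab2 up t k (Hup : upOK up) m : forall f p,
  (Z.of_nat k < lev p + Z.of_nat f)%Z -> V up t k f p = V up t k (m + f) p.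
Proof.
  induction m; intros f p H; simpl; auto.
  rewrite IHm by auto. apply V_stab; auto. lia.
Qed.

Lemma V_pt up t k L j' : (L <= k)%nat -> (j' <= L)%nat ->
  V up t k (S k) (pt L j') = sumL (seq 0 (S L)) (fun j => Hg L j' j * U up t k k (pt L j)).
Proof.
  intros HL Hj. rewrite V_S. unfold pt at 1 2 3 4 5; simpl fst; simpl snd.
  replace (Z.of_nat L - Z.of_nat j' + Z.of_nat j')%Z with (Z.of_nat L) by ring.
  rewrite !Nat2Z.id.
  destruct (Z.leb_spec 0 (Z.of_nat L - Z.of_nat j')); [|lia].
  destruct (Z.leb_spec 0 (Z.of_nat j')); [|lia].
  destruct (Z.leb_spec (Z.of_nat L) (Z.of_nat k)); [|lia]. simpl. reflexivity.
Qed.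

Lemma pt_of p : N2 p -> p = pt (Z.to_nat (lev p)) (Z.to_nat (snd p)) /\ (Z.to_nat (snd p) <= Z.to_nat (lev p))%nat.
Proof.
  destruct p as [x y]; unfold N2, lev, pt; simpl; intros [Hx Hy]. split; [|lia].
  f_equal; lia.
Qed.

Lemma okb_N2 q : okb q = true -> N2 q.
Proof. unfold okb, N2. intros E. apply Bool.andb_true_iff in E as [E1 E2]. apply Z.leb_le in E1, E2. auto. Qed.

Lemma hor1 L i (F : point -> R) : (i <= L)%nat ->
  (if okb (padd (pt L i) (-1, 1)%Z) then F (padd (pt L i) (-1, 1)%Z) else 0) =
  (if (i <? L)%nat then 1 else 0) * F (pt L (S i)).
Proof.
  intros Hi. unfold okb, padd, pt; simpl.
  destruct (Nat.ltb_spec i L).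
  - destruct (Z.leb_spec 0 (Z.of_nat L - Z.of_nat i + -1)); [|lia].
    destruct (Z.leb_spec 0 (Z.of_nat i + 1)); [|lia]. simpl.
    rewrite Rmult_1_l; f_equal; f_equal; lia.
  - destruct (Z.leb_spec 0 (Z.of_nat L - Z.of_nat i + -1)); [lia|]. simpl. ring.
Qed.

Lemma hor2 L i (F : point -> R) : (i <= L)%nat ->
  (if okb (padd (pt L i) (1, -1)%Z) then F (padd (pt L i) (1, -1)%Z) else 0) =
  (if (0 <? i)%nat then 1 else 0) * F (pt L (pred i)).
Proof.
  intros Hi. unfold okb, padd, pt; simpl.
  destruct (Nat.ltb_spec 0 i).
  - destruct (Z.leb_spec 0 (Z.of_nat L - Z.of_nat i + 1)); [|lia].
    destruct (Z.leb_spec 0 (Z.of_nat i + -1)); [|lia]. simpl.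
    rewrite Rmult_1_l; f_equal; f_equal; lia.
  - destruct (Z.leb_spec 0 (Z.of_nat i + -1)); [lia|]. rewrite Bool.andb_false_r. ring.
Qed.

Lemma sumL_delta0 n f i : (i < n)%nat -> sumL (seq 0 n) (fun j => (if Nat.eqb i j then 1 else 0) * f j) = f i.
Proof. intros H; exact (sumL_delta n f i H 0). Qed.

Definition stOK (St up : list point) := forall f : point -> R, sumL St f = f (-1,1)%Z + f (1,-1)%Z + sumL up f.

Lemma ept_zero t p : lev p <> lev t -> ept t p = 0.
Proof.
  unfold ept, lev; intros H.
  destruct (Z.eqb_spec (fst p) (fst t)); destruct (Z.eqb_spec (snd p) (snd t)); simpl; auto; lia.
Qed.

Lemma V_fix St up t k (Hst : stOK St up) (Hup : upOK up) (Ht : lev t = Z.of_nat k) p : N2 p ->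
  V up t k (S k) p = ept t p + /2 * sumL St (fun s => if okb (padd p s) then V up t k (S k) (padd p s) else 0).
Proof.
  intros Hp. rewrite Hst.
  destruct (Z_lt_le_dec (Z.of_nat k) (lev p)) as [Hh|Hl].
  - rewrite V_high by auto. rewrite ept_zero by lia.
    rewrite sumL_zero.
    + rewrite !V_high; unfold lev, padd in *; simpl; try lia.
      destruct (okb _); destruct (okb _); ring.
    + intros s Hs. destruct (Hup s Hs) as (?&?&?). destruct (okb _); auto.
      apply V_high. unfold lev, padd in *; simpl; lia.
  - destruct (pt_of p Hp) as [Ep Hi].
    remember (Z.to_nat (lev p)) as L. remember (Z.to_nat (snd p)) as i.
    assert (HLk : (L <= k)%nat) by lia.
    rewrite Ep. clear Ep Hp HeqL Heqi Hl p.
    rewrite (hor1 L i (V up t k (S k))), (hor2 L i (V up t k (S k))) by auto.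
    rewrite V_pt by lia.
    assert (E1 : (if (i <? L)%nat then 1 else 0) * V up t k (S k) (pt L (S i)) =
       (if (i <? L)%nat then 1 else 0) * sumL (seq 0 (S L)) (fun j => Hg L (S i) j * U up t k k (pt L j))).
    { destruct (Nat.ltb_spec i L); [rewrite V_pt by lia; ring | ring]. }
    rewrite E1, V_pt by lia. clear E1.
    assert (E2 : sumL up (fun s => if okb (padd (pt L i) s) then V up t k (S k) (padd (pt L i) s) else 0)
               = sumL up (fun s => V up t k k (padd (pt L i) s))).
    { apply sumL_ext; intros s Hs. destruct (Hup s Hs) as (?&?&?).
      assert (Eo : okb (padd (pt L i) s) = true).
      { unfold okb, padd, pt; simpl.
        destruct (Z.leb_spec 0 (Z.of_nat L - Z.of_nat i + fst s)); [|lia].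
        destruct (Z.leb_spec 0 (Z.of_nat i + snd s)); [|lia]. reflexivity. }
      rewrite Eo. symmetry. apply V_stab; auto. unfold lev; simpl; lia. }
    rewrite E2. clear E2.
    rewrite (sumL_ext _ (fun j => Hg L i j * U up t k k (pt L j))
       (fun j => (if Nat.eqb i j then 1 else 0) * U up t k k (pt L j) +
         ((/2 * (if (i <? L)%nat then 1 else 0)) * (Hg L (S i) j * U up t k k (pt L j)) +
          (/2 * (if (0 <? i)%nat then 1 else 0)) * (Hg L (pred i) j * U up t k k (pt L j))))).
    2: { intros j Hj. apply in_seq in Hj. rewrite Hg_id by lia. ring. }
    rewrite !sumL_plus, !sumL_scal, sumL_delta0 by lia.
    unfold U at 1. ring.
Qed.

Lemma sumL_nonneg {A} (l : list A) f : (forall x, In x l -> 0 <= f x) -> 0 <= sumL l f.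
Proof. induction l; simpl; intros H; [lra|]. pose proof (H a (or_introl eq_refl)).
  assert (0 <= sumL l f) by (apply IHl; auto). lra. Qed.
Lemma sumL_le {A} (l : list A) f g : (forall x, In x l -> f x <= g x) -> sumL l f <= sumL l g.
Proof. induction l; simpl; intros H; [lra|]. pose proof (H a (or_introl eq_refl)).
  assert (sumL l f <= sumL l g) by (apply IHl; auto). lra. Qed.
Lemma sumL_minus {A} (l : list A) f g : sumL l (fun x => f x - g x) = sumL l f - sumL l g.
Proof. induction l; simpl; try rewrite IHl; ring. Qed.

Lemma Hg_nonneg L i j : (i <= L)%nat -> (j <= L)%nat -> 0 <= Hg L i j.
Proof.
  intros Hi Hj. apply le_INR in Hi, Hj. pose proof (pos_INR i). pose proof (pos_INR j).
  unfold Hg, Rdiv. destruct (_ <=? _)%nat;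
  (apply Rmult_le_pos; [apply Rmult_le_pos; lra | apply Rlt_le, Rinv_0_lt_compat; lra]).
Qed.

Lemma ept_nonneg t p : 0 <= ept t p.
Proof. unfold ept; destruct (_ && _)%bool; lra. Qed.

Lemma V_nonneg up t k f : forall p, 0 <= V up t k f p.
Proof.
  induction f; intros p; [simpl; lra|]. rewrite V_S.
  destruct (_ && _)%bool eqn:E; [|lra].
  apply Bool.andb_true_iff in E as [E E3]. apply Bool.andb_true_iff in E as [E1 E2].
  apply Z.leb_le in E1, E2.
  apply sumL_nonneg; intros j Hj; apply in_seq in Hj.
  apply Rmult_le_pos; [apply Hg_nonneg; lia|].
  unfold U. pose proof (ept_nonneg t (pt (Z.to_nat (fst p + snd p)) j)).
  assert (0 <= sumL up (fun s => V up t k f (padd (pt (Z.to_nat (fst p + snd p)) j) s)))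
    by (apply sumL_nonneg; auto). lra.
Qed.

Fixpoint psum (a : nat -> R) (N : nat) : R :=
  match N with O => a O | S N' => psum a N' + a (S N') end.
Lemma psum_sum_n a N : psum a N = sum_n a N.
Proof. induction N; simpl; [rewrite sum_O; auto| rewrite sum_Sn, IHN; reflexivity]. Qed.
Lemma psum_shift a N : psum a (S N) = a 0%nat + psum (fun n => a (S n)) N.
Proof. induction N; simpl in *; [ring|]. rewrite IHN. ring. Qed.
Lemma psum_ext a b N : (forall n, a n = b n) -> psum a N = psum b N.
Proof. intros H; induction N; simpl; rewrite ?IHN, ?H; auto. Qed.
Lemma psum_scal c a N : psum (fun n => c * a n) N = c * psum a N.
Proof. induction N; simpl; try rewrite IHN; ring. Qed.
Lemma psum_sumL {A} (l : list A) g N : psum (fun n => sumL l (fun x => g x n)) N = sumL l (fun x => psum (g x) N).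
Proof. induction N; simpl; auto. rewrite IHN, <- sumL_plus; reflexivity. Qed.
Lemma psum_if (b : bool) a N : psum (fun n => if b then a n else 0) N = if b then psum a N else 0.
Proof. destruct b; [apply psum_ext; auto|]. induction N; simpl; try rewrite IHN; ring. Qed.

Lemma term_nonneg St t p n : 0 <= term St t p n.
Proof. unfold term, Rdiv. apply Rmult_le_pos; [apply pos_INR| apply Rlt_le, Rinv_0_lt_compat, pow_lt; lra]. Qed.

Lemma term_0 St t p : term St t p 0 = ept t p.
Proof. unfold term. rewrite cnt_0. simpl. field. Qed.

Lemma psum_rec St t p N : psum (term St t p) (S N) =
  ept t p + /2 * sumL St (fun s => if okb (padd p s) then psum (term St t (padd p s)) N else 0).
Proof.
  rewrite psum_shift, term_0. f_equal.
  rewrite (psum_ext _ _ N (term_S St t p)), psum_scal, psum_sumL. f_equal.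
  apply sumL_ext; intros s _. apply psum_if.
Qed.

Lemma psum_bound St up t k (Hst : stOK St up) (Hup : upOK up) (Ht : lev t = Z.of_nat k) N :
  forall p, N2 p -> psum (term St t p) N <= V up t k (S k) p.
Proof.
  induction N; intros p Hp.
  - change (psum (term St t p) 0) with (term St t p 0). rewrite term_0, (V_fix St up t k) by auto.
    assert (0 <= sumL St (fun s => if okb (padd p s) then V up t k (S k) (padd p s) else 0)).
    { apply sumL_nonneg; intros s _; destruct (okb _); [apply V_nonneg|lra]. }
    lra.
  - rewrite psum_rec, (V_fix St up t k) by auto.
    assert (sumL St (fun s => if okb (padd p s) then psum (term St t (padd p s)) N else 0) <=
            sumL St (fun s => if okb (padd p s) then V up t k (S k) (padd p s) else 0)).
    { apply sumL_le; intros s _. destruct (okb _) eqn:E; [|lra]. apply IHN, okb_N2; auto. }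
    lra.
Qed.

Lemma ex_series_term St up t k (Hst : stOK St up) (Hup : upOK up) (Ht : lev t = Z.of_nat k) p :
  N2 p -> ex_series (term St t p).
Proof.
  intros Hp.
  destruct (ex_finite_lim_seq_incr (sum_n (term St t p)) (V up t k (S k) p)) as [l Hl].
  - intros n. rewrite sum_Sn. pose proof (term_nonneg St t p (S n)). change (plus ?a ?b) with (a + b). lra.
  - intros n. rewrite <- psum_sum_n. apply (psum_bound St up t k); auto.
  - exists l. exact Hl.
Qed.

Lemma is_series_zero : is_series (fun _ : nat => 0) 0.
Proof.
  assert (H : Rabs (/2) < 1) by (rewrite Rabs_pos_eq; lra).
  pose proof (is_series_scal 0 _ _ (is_series_geom (/2) H)) as H2.
  assert (H3 : is_series (fun n : nat => 0 * (/2)^n) (0 * / (1 - /2))) by exact H2.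
  rewrite Rmult_0_l in H3.
  apply (is_series_ext _ _ _ (fun n => Rmult_0_l _) H3).
Qed.

Lemma is_series_sumL {A} (l : list A) (g : A -> nat -> R) (c : A -> R) :
  (forall x, In x l -> is_series (g x) (c x)) ->
  is_series (fun n => sumL l (fun x => g x n)) (sumL l c).
Proof.
  induction l as [|a l IH]; simpl; intros H.
  - apply is_series_zero.
  - exact (is_series_plus _ _ _ _ (H a (or_introl eq_refl)) (IH (fun x Hx => H x (or_intror Hx)))).
Qed.

Definition Sv St t p := Series (term St t p).

Lemma Sv_fix St up t k (Hst : stOK St up) (Hup : upOK up) (Ht : lev t = Z.of_nat k) p : N2 p ->
  Sv St t p = ept t p + /2 * sumL St (fun s => if okb (padd p s) then Sv St t (padd p s) else 0).
Proof.
  intros Hp. unfold Sv at 1. apply is_series_unique. apply is_series_decr_1.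
  apply (is_series_ext (fun n => /2 * sumL St (fun s => if okb (padd p s) then term St t (padd p s) n else 0))).
  { intros n; rewrite term_S; auto. }
  rewrite term_0.
  match goal with |- is_series _ ?l =>
    replace l with (/ 2 * sumL St (fun s => if okb (padd p s) then Sv St t (padd p s) else 0))
    by (change (plus ?a ?b) with (a + b); change (opp ?a) with (- a); ring) end.
  apply (is_series_scal (/2) (fun n => sumL St (fun s => if okb (padd p s) then term St t (padd p s) n else 0))).
  apply (is_series_sumL St (fun s n => if okb (padd p s) then term St t (padd p s) n else 0)).
  intros s _. destruct (okb _) eqn:E; [|apply is_series_zero].
  apply Series_correct. apply (ex_series_term St up t k); auto. apply okb_N2; auto.
Qed.

Lemma cnt_high St up t k (Hst : stOK St up) (Hup : upOK up) (Ht : lev t = Z.of_nat k) n :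
  forall p, (Z.of_nat k < lev p)%Z -> INR (cnt St t n p) = 0.
Proof.
  induction n; intros p Hp.
  - rewrite cnt_0. apply ept_zero. lia.
  - rewrite cnt_S, Hst.
    rewrite sumL_zero.
    + rewrite !IHn; unfold lev, padd in *; simpl; try lia.
      destruct (okb _); destruct (okb _); ring.
    + intros s Hs. destruct (Hup s Hs) as (?&?&?). destruct (okb _); auto.
      apply IHn. unfold lev, padd in *; simpl; lia.
Qed.

Lemma Sv_high St up t k (Hst : stOK St up) (Hup : upOK up) (Ht : lev t = Z.of_nat k) p :
  (Z.of_nat k < lev p)%Z -> Sv St t p = 0.
Proof.
  intros Hp. unfold Sv. apply is_series_unique.
  apply (is_series_ext (fun _ => 0)); [|apply is_series_zero].
  intros n. unfold term. rewrite (cnt_high St up t k) by auto. unfold Rdiv; rewrite Rmult_0_l; reflexivity.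
Qed.

Lemma harm (D : nat -> R) L :
  (forall i, (i <= L)%nat -> 2 * D i = (if (i <? L)%nat then 1 else 0) * D (S i) + (if (0 <? i)%nat then 1 else 0) * D (pred i)) ->
  forall i, (i <= L)%nat -> D i = 0.
Proof.
  intros H.
  assert (P : forall n, (S n <= L)%nat -> D n = INR (S n) * D 0%nat /\ D (S n) = INR (S (S n)) * D 0%nat).
  { induction n; intros Hn.
    - pose proof (H 0%nat ltac:(lia)) as H0. simpl in H0.
      destruct (Nat.ltb_spec 0 L); [|lia]. simpl INR. lra.
    - destruct IHn as [I1 I2]; [lia|]. split; auto.
      pose proof (H (S n) ltac:(lia)) as H0.
      destruct (Nat.ltb_spec (S n) L); [|lia]. simpl pred in H0.
      replace ((0 <? S n)%nat) with true in H0 by reflexivity.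
      rewrite I1, I2 in H0. rewrite !S_INR in *. lra. }
  assert (Z0 : D 0%nat = 0).
  { destruct L as [|L'].
    - pose proof (H 0%nat ltac:(lia)) as H0. simpl in H0. lra.
    - destruct (P L' ltac:(lia)) as [I1 I2].
      pose proof (H (S L') ltac:(lia)) as H0.
      rewrite Nat.ltb_irrefl in H0. replace ((0 <? S L')%nat) with true in H0 by reflexivity.
      simpl pred in H0. rewrite I1, I2 in H0. rewrite !S_INR in H0.
      assert (E : (INR L' + 3) * D 0%nat = 0) by nra.
      apply Rmult_integral in E as [E|E]; auto. pose proof (pos_INR L'). lra. }
  intros [|i] Hi; auto. destruct (P i Hi) as [_ I2]. rewrite I2, Z0. ring.
Qed.

Definition dd St up t k p := V up t k (S k) p - Sv St t p.

Lemma d_fix St up t k (Hst : stOK St up) (Hup : upOK up) (Ht : lev t = Z.of_nat k) p : N2 p ->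
  dd St up t k p = /2 * sumL St (fun s => if okb (padd p s) then dd St up t k (padd p s) else 0).
Proof.
  intros Hp. unfold dd. rewrite (V_fix St up t k), (Sv_fix St up t k) by auto.
  rewrite (sumL_ext St (fun s => if okb (padd p s) then V up t k (S k) (padd p s) - Sv St t (padd p s) else 0) (fun s => (if okb (padd p s) then V up t k (S k) (padd p s) else 0) -
     (if okb (padd p s) then Sv St t (padd p s) else 0))).
  2: { intros s _; destruct (okb _); ring. }
  rewrite sumL_minus. ring.
Qed.

Lemma d_zero St up t k (Hst : stOK St up) (Hup : upOK up) (Ht : lev t = Z.of_nat k) m :
  forall p, N2 p -> (Z.of_nat k < lev p + Z.of_nat m)%Z -> dd St up t k p = 0.
Proof.
  induction m; intros p Hp Hl.
  - unfold dd. rewrite V_high, (Sv_high St up t k) by (auto; lia). ring.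
  - destruct (Z_lt_le_dec (Z.of_nat k) (lev p + Z.of_nat m)) as [Hh|Hle]; [apply IHm; auto|].
    destruct (pt_of p Hp) as [Ep Hi].
    remember (Z.to_nat (lev p)) as L. remember (Z.to_nat (snd p)) as i.
    assert (HLk : (L + m = k)%nat) by (destruct Hp; unfold lev in *; lia).
    rewrite Ep. clear Ep Hl Hle HeqL Heqi.
    apply (harm (fun i => dd St up t k (pt L i)) L); auto.
    intros j Hj.
    rewrite (d_fix St up t k) by (auto; unfold N2, pt; simpl; lia).
    rewrite Hst, hor1, hor2 by auto.
    rewrite (sumL_zero up).
    + lra.
    + intros s Hs. destruct (Hup s Hs) as (?&?&?). destruct (okb _) eqn:E; auto.
      apply IHm; [apply okb_N2; auto|]. unfold lev, padd, pt; simpl. lia.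
Qed.

Definition isQ (x : R) := exists q : Q, x = Q2R q.
Lemma isQ_0 : isQ 0. Proof. exists 0%Q. unfold Q2R; simpl. field. Qed.
Lemma isQ_1 : isQ 1. Proof. exists 1%Q. unfold Q2R; simpl. field. Qed.
Lemma isQ_INR n : isQ (INR n).
Proof. exists (inject_Z (Z.of_nat n)). unfold Q2R; simpl. rewrite INR_IZR_INZ. field. Qed.
Lemma isQ_plus x y : isQ x -> isQ y -> isQ (x + y).
Proof. intros [a ->] [b ->]. exists (a + b)%Q. rewrite Q2R_plus. auto. Qed.
Lemma isQ_mult x y : isQ x -> isQ y -> isQ (x * y).
Proof. intros [a ->] [b ->]. exists (a * b)%Q. rewrite Q2R_mult. auto. Qed.
Lemma isQ_minus x y : isQ x -> isQ y -> isQ (x - y).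
Proof. intros [a ->] [b ->]. exists (a - b)%Q. rewrite Q2R_minus. auto. Qed.
Lemma isQ_opp x : isQ x -> isQ (- x).
Proof. intros [a ->]. exists (- a)%Q. rewrite Q2R_opp. auto. Qed.
Lemma isQ_inv x : isQ x -> isQ (/ x).
Proof.
  intros [a ->]. destruct (Qeq_dec a 0) as [E|E].
  - rewrite (Qeq_eqR _ _ E). exists 0%Q. unfold Q2R; simpl. rewrite Rmult_0_l, Rinv_0. ring.
  - exists (/ a)%Q. rewrite Q2R_inv; auto.
Qed.
Lemma isQ_if (b : bool) x y : isQ x -> isQ y -> isQ (if b then x else y).
Proof. destruct b; auto. Qed.
Lemma isQ_sumL {A} (l : list A) f : (forall x, In x l -> isQ (f x)) -> isQ (sumL l f).
Proof. induction l; simpl; intros H; [apply isQ_0|]. apply isQ_plus; auto. Qed.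

Lemma isQ_2 : isQ 2. Proof. replace 2 with (INR 2) by (simpl; ring). apply isQ_INR. Qed.

Lemma isQ_Hg L i j : isQ (Hg L i j).
Proof.
  unfold Hg, Rdiv. pose proof isQ_2. pose proof isQ_1.
  destruct (_ <=? _)%nat; repeat (apply isQ_mult || apply isQ_plus || apply isQ_minus || apply isQ_opp || apply isQ_inv || apply isQ_INR || assumption).
Qed.

Lemma isQ_V up t k f : forall p, isQ (V up t k f p).
Proof.
  induction f; intros p; [apply isQ_0|]. rewrite V_S. apply isQ_if; [|apply isQ_0].
  apply isQ_sumL; intros j _. apply isQ_mult; [apply isQ_Hg|]. unfold U.
  apply isQ_plus; [unfold ept; apply isQ_if; [apply isQ_1|apply isQ_0]|].
  apply isQ_mult; [apply isQ_inv, isQ_2|]. apply isQ_sumL; auto.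
Qed.

Lemma main St up t k (Hst : stOK St up) (Hup : upOK up) (Ht : lev t = Z.of_nat k) :
  exists q : Q, is_series (term St t (0%Z, 0%Z)) (Q2R q).
Proof.
  destruct (isQ_V up t k (S k) (0%Z, 0%Z)) as [q Hq]. exists q. rewrite <- Hq.
  assert (H : dd St up t k (0%Z, 0%Z) = 0).
  { apply (d_zero St up t k Hst Hup Ht (S k)); unfold N2, lev; simpl; lia. }
  unfold dd in H. replace (V up t k (S k) (0%Z, 0%Z)) with (Sv St t (0%Z, 0%Z)) by lra.
  apply Series_correct. apply (ex_series_term St up t k); auto. unfold N2; simpl; lia.
Qed.

Theorem proposition2p12 :
  forall (St : list point), In St [stepA; stepB; stepC; stepD; stepE] ->
  forall (k i : nat), (i <= k)%nat ->
  exists q : Q,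
    is_series (fun n : nat => INR (nwalks St n (Sk_point k i)) / 2 ^ n) (Q2R q).
Proof.
  intros St HSt k i Hik.
  assert (Ht : lev (Sk_point k i) = Z.of_nat k) by (unfold lev, Sk_point; simpl; lia).
  simpl in HSt.
  destruct HSt as [<-|[<-|[<-|[<-|[<-|[]]]]]].
  - apply (main stepA [(1,1)%Z] _ k); auto; [intros f; simpl; ring|].
    intros s Hs; simpl in Hs; repeat (destruct Hs as [<-|Hs]; [simpl; lia|]); destruct Hs.
  - apply (main stepB [(0,1)%Z; (1,0)%Z] _ k); auto; [intros f; simpl; ring|].
    intros s Hs; simpl in Hs; repeat (destruct Hs as [<-|Hs]; [simpl; lia|]); destruct Hs.
  - apply (main stepC [(0,1)%Z; (1,1)%Z; (1,0)%Z] _ k); auto; [intros f; simpl; ring|].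
    intros s Hs; simpl in Hs; repeat (destruct Hs as [<-|Hs]; [simpl; lia|]); destruct Hs.
  - apply (main stepD [(0,1)%Z] _ k); auto; [intros f; simpl; ring|].
    intros s Hs; simpl in Hs; repeat (destruct Hs as [<-|Hs]; [simpl; lia|]); destruct Hs.
  - apply (main stepE [(0,1)%Z; (1,1)%Z] _ k); auto; [intros f; simpl; ring|].
    intros s Hs; simpl in Hs; repeat (destruct Hs as [<-|Hs]; [simpl; lia|]); destruct Hs.
Qed.
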